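(* Let $r,p\ge0$ be integers and $a_{-r},\dots,a_p$ real coefficients whose symbol $\gamma(\xi)=\sum_{k=-r}^{p}a_ke^{ik\xi}$ satisfies $|\gamma(\xi)|\le1$ for all $\xi\in\mathbb R$, and such that $\sum_{k=-r}^pa_k=1$ and $\sum_{k=-r}^p k a_k=-\lambda$ for some $\lambda>0$. Then $|a_0|<1$. *)

(* Defs.v *)
From Stdlib Require Import Reals ZArith.
From Coquelicot Require Import Coquelicot.
Open Scope R_scope.

Definition zsum (r p : nat) (f : Z -> R) : R :=
  sum_f_R0 (fun j => f (Z.of_nat j - Z.of_nat r)%Z) (r + p).

(* The symbol gamma(xi) = sum_{k=-r}^{p} a_k e^{i k xi}, as a complex number
   (real part, imaginary part), using e^{i t} = cos t + i sin t. *)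
Definition symbol (r p : nat) (a : Z -> R) (xi : R) : C :=
  (zsum r p (fun k => a k * cos (IZR k * xi)),
   zsum r p (fun k => a k * sin (IZR k * xi))).

(* Main.v *)
Require Import Defs.
From Stdlib Require Import Reals ZArith Lra Lia.
From Coquelicot Require Import Coquelicot.
Open Scope R_scope.

Lemma sin_periodZ x k : sin (x + 2 * IZR k * PI) = sin x.
Proof.
  destruct (Z_le_gt_dec 0 k) as [H|H].
  - rewrite <- (Z2Nat.id k) by lia. rewrite <- INR_IZR_INZ. apply sin_period.
  - set (y := x + 2 * IZR k * PI).
    replace x with (y + 2 * INR (Z.to_nat (- k)) * PI).
    + now rewrite sin_period.
    + unfold y. rewrite INR_IZR_INZ, Z2Nat.id by lia. rewrite opp_IZR. ring.
Qed.

Lemma cos_tele th ph n :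
  2 * sin (ph/2) * sum_f_R0 (fun j => cos (th + INR j * ph)) n =
  sin (th + (INR n + 1/2) * ph) - sin (th - ph/2).
Proof.
  induction n as [|n IH].
  - simpl. replace (th + 0*ph) with th by ring.
    replace (th + (0 + 1/2)*ph) with (th + ph/2) by field.
    rewrite sin_plus, sin_minus. ring.
  - rewrite tech5, Rmult_plus_distr_l, IH, S_INR.
    replace (th + (INR n + 1/2) * ph) with ((th + (INR n + 1) * ph) - ph/2) by field.
    replace (th + (INR n + 1 + 1/2) * ph) with ((th + (INR n + 1) * ph) + ph/2) by field.
    set (u := th + (INR n + 1) * ph).
    rewrite (sin_plus u (ph/2)), (sin_minus u (ph/2)). ring.
Qed.

Lemma sum_cos_zero (n : nat) (k : Z) (t : R) :
  k <> 0%Z -> (Z.abs k <= Z.of_nat n)%Z ->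
  sum_f_R0 (fun j => cos (IZR k * (2 * PI * INR j / INR (S n) + t))) n = 0.
Proof.
  intros Hk Hb.
  set (N := INR (S n)).
  assert (HN : 0 < N) by (apply lt_0_INR; lia).
  set (ph := 2 * PI * IZR k / N).
  assert (Hs : sin (ph / 2) <> 0).
  { unfold ph. replace (2 * PI * IZR k / N / 2) with (PI * (IZR k / N)) by (field; lra).
    assert (Hlt : Rabs (IZR k) < N).
    { unfold N. rewrite <- abs_IZR, INR_IZR_INZ. apply IZR_lt. lia. }
    destruct (Z_le_gt_dec 0 k) as [H|H].
    - assert (0 < IZR k) by (apply IZR_lt; lia).
      rewrite Rabs_right in Hlt by lra.
      apply Rgt_not_eq, sin_gt_0.
      + apply Rmult_lt_0_compat; [apply PI_RGT_0|]. apply Rdiv_lt_0_compat; lra.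
      + rewrite <- (Rmult_1_r PI) at 2. apply Rmult_lt_compat_l; [apply PI_RGT_0|].
        apply Rlt_div_l; lra.
    - assert (IZR k < 0) by (apply IZR_lt; lia).
      rewrite Rabs_left in Hlt by lra.
      replace (PI * (IZR k / N)) with (- (PI * (- IZR k / N))) by (field; lra).
      rewrite sin_neg. apply Ropp_neq_0_compat. apply Rgt_not_eq, sin_gt_0.
      + apply Rmult_lt_0_compat; [apply PI_RGT_0|]. apply Rdiv_lt_0_compat; lra.
      + rewrite <- (Rmult_1_r PI) at 2. apply Rmult_lt_compat_l; [apply PI_RGT_0|].
        apply Rlt_div_l; lra. }
  assert (E : sum_f_R0 (fun j => cos (IZR k * (2 * PI * INR j / N + t))) n
            = sum_f_R0 (fun j => cos (IZR k * t + INR j * ph)) n).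
  { apply sum_eq. intros i _. f_equal. unfold ph, N in *. field. lra. }
  rewrite E.
  apply (Rmult_eq_reg_l (2 * sin (ph/2))); [|lra].
  rewrite cos_tele, Rmult_0_r.
  replace (IZR k * t + (INR n + 1 / 2) * ph) with (IZR k * t - ph/2 + 2 * IZR k * PI).
  - rewrite sin_periodZ. ring.
  - assert (HnN : INR n = N - 1) by (unfold N; rewrite S_INR; ring).
    rewrite HnN. unfold ph. field. lra.
Qed.

Lemma sum_exch (F : nat -> nat -> R) n m :
  sum_f_R0 (fun j => sum_f_R0 (fun k => F j k) m) n =
  sum_f_R0 (fun k => sum_f_R0 (fun j => F j k) n) m.
Proof.
  induction n as [|n IH]; simpl.
  - reflexivity.
  - rewrite IH. rewrite <- sum_plus. reflexivity.
Qed.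

Lemma sum_single (c : R) r n :
  sum_f_R0 (fun i => if Nat.eqb i r then c else 0) n = if Nat.leb r n then c else 0.
Proof.
  induction n as [|n IH].
  - destruct r; simpl; auto.
  - rewrite tech5, IH. destruct (Nat.eqb_spec (S n) r); destruct (Nat.leb_spec r n);
      destruct (Nat.leb_spec r (S n)); try lia; try lra.
Qed.

Lemma sum_upper (f : nat -> R) n :
  (forall i, f i <= 1) -> sum_f_R0 f n <= f 0%nat + INR n.
Proof.
  intros H; induction n as [|n IH]; [|rewrite tech5].
  - simpl; lra.
  - rewrite S_INR. specialize (H (S n)). lra.
Qed.

Lemma sum_lower (f : nat -> R) n :
  (forall i, -1 <= f i) -> f 0%nat - INR n <= sum_f_R0 f n.
Proof.
  intros H; induction n as [|n IH]; [|rewrite tech5].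
  - simpl; lra.
  - rewrite S_INR. specialize (H (S n)). lra.
Qed.

Lemma derive_sum (g : nat -> R -> R) (g' : nat -> R) x n :
  (forall j, is_derive (g j) x (g' j)) ->
  is_derive (fun t => sum_f_R0 (fun j => g j t) n) x (sum_f_R0 g' n).
Proof.
  intros H; induction n as [|n IH]; simpl.
  - apply H.
  - apply (is_derive_plus (fun t => sum_f_R0 (fun j => g j t) n) (g (S n))); auto.
Qed.

Theorem lemma3p7 (r p : nat) (a : Z -> R) (lambda : R)
  (Hsym : forall xi : R, Cmod (symbol r p a xi) <= 1)
  (Hsum : zsum r p a = 1)
  (Hmom : zsum r p (fun k => IZR k * a k) = - lambda)
  (Hlam : 0 < lambda) :
  Rabs (a 0%Z) < 1.
Proof.
  destruct (Rlt_or_le (Rabs (a 0%Z)) 1) as [H|H]; [exact H|exfalso].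
  set (n := (r + p)%nat).
  set (Re' := fun x => zsum r p (fun k => a k * cos (IZR k * x))).
  set (Im' := fun x => zsum r p (fun k => a k * sin (IZR k * x))).
  assert (Hb : forall x, Re' x ^ 2 + Im' x ^ 2 <= 1).
  { intros x. specialize (Hsym x). unfold symbol, Cmod in Hsym. simpl fst in Hsym.
    simpl snd in Hsym. fold (Re' x) (Im' x) in Hsym.
    rewrite <- sqrt_1 in Hsym. apply sqrt_le_0 in Hsym; try lra; nra. }
  assert (Hre : forall x, -1 <= Re' x <= 1).
  { intros x. specialize (Hb x). split; nra. }
  assert (Key : forall t, sum_f_R0 (fun j => Re' (2 * PI * INR j / INR (S n) + t)) n
                 = INR (S n) * a 0%Z).
  { intros t. unfold Re', zsum. fold n.
    rewrite sum_exch.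
    transitivity (sum_f_R0 (fun i => if Nat.eqb i r then INR (S n) * a 0%Z else 0) n).
    - apply sum_eq. intros i Hi.
      rewrite <- (sum_eq (fun j => cos (IZR (Z.of_nat i - Z.of_nat r) *
                 (2 * PI * INR j / INR (S n) + t)) * a (Z.of_nat i - Z.of_nat r)%Z)).
      2: { intros; ring. }
      rewrite <- scal_sum.
      destruct (Nat.eqb_spec i r) as [->|Hne].
      + replace (Z.of_nat r - Z.of_nat r)%Z with 0%Z by lia.
        rewrite (sum_eq _ (fun _ => 1)).
        * rewrite sum_cte. rewrite S_INR. ring.
        * intros; rewrite Rmult_0_l; apply cos_0.
      + rewrite sum_cos_zero; [ring|lia|lia].
    - rewrite sum_single. destruct (Nat.leb_spec r n); [reflexivity|unfold n in *; lia]. }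
  assert (HR : forall t, 1 <= Re' t ^ 2).
  { intros t. specialize (Key t).
    pose proof (sum_upper (fun j => Re' (2 * PI * INR j / INR (S n) + t)) n
                  (fun i => proj2 (Hre _))) as U.
    pose proof (sum_lower (fun j => Re' (2 * PI * INR j / INR (S n) + t)) n
                  (fun i => proj1 (Hre _))) as L.
    cbv beta in U, L.
    replace (2 * PI * INR 0 / INR (S n) + t) with t in U, L
      by (change (INR 0) with 0; field; apply not_0_INR; lia).
    rewrite Key, S_INR in U, L.
    pose proof (pos_INR n).
    destruct (Rle_or_lt 0 (a 0%Z)).
    - rewrite Rabs_right in H by lra.
      assert (1 <= Re' t) by nra. nra.
    - rewrite Rabs_left in H by lra.
      assert (Re' t <= -1) by nra. nra. }
  assert (HI : forall t, Im' t = 0).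
  { intros t. specialize (Hb t). specialize (HR t). nra. }
  assert (D : is_derive Im' 0 (zsum r p (fun k => IZR k * a k))).
  { unfold Im', zsum.
    apply (derive_sum (fun j t => a (Z.of_nat j - Z.of_nat r)%Z *
                    sin (IZR (Z.of_nat j - Z.of_nat r) * t))).
    intros j. auto_derive; auto. rewrite Rmult_0_r, cos_0. ring. }
  assert (D0 : is_derive Im' 0 0).
  { apply (is_derive_ext (fun _ => 0)). intros; rewrite HI; reflexivity.
    auto_derive; auto. }
  apply is_derive_unique in D. apply is_derive_unique in D0.
  rewrite Hmom in D. lra.
Qed.
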